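(* Let $m\in\mathbb{N}$ and let $\alpha_1,\dots,\alpha_n\in\mathbb{C}$ be $m$-th roots of unity. Let $q_1$ be the smallest prime factor of $m$, and let $k\in\mathbb{N}$ satisfy $q_1>\max\{n,k\}$. Then $\alpha_1^k+\alpha_2^k+\cdots+\alpha_n^k\neq 0$.
   Context: $\mathbb{N}$ denotes the set of positive integers. The $\alpha_i$ need not be distinct. *)

(* Defs.v *)
(* complex numbers are modelled by algC (algebraic complex
   numbers); roots of unity are algebraic, so nothing is lost. *)
From HB Require Import structures.
From mathcomp Require Import all_boot all_order all_algebra all_field.
Set Implicit Arguments.
Unset Strict Implicit.
Unset Printing Implicit Defensive.

(* Main.v *)
Require Import Defs.
From HB Require Import structures.
From mathcomp Require Import all_boot all_order all_algebra all_field.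
Import GRing.Theory Num.Theory.
Local Open Scope ring_scope.

Lemma coprime_small (m t : nat) : (0 < t)%N -> (t < pdiv m)%N -> coprime t m.
Proof.
move=> t0 tp; rewrite /coprime; set g := gcdn t m.
have g0 : (0 < g)%N by rewrite gcdn_gt0 t0.
rewrite eqn_leq g0 andbT leqNgt; apply/negP => g1; have := pdiv_min_dvd g1 (dvdn_gcdr t m).
have := dvdn_leq t0 (dvdn_gcdl t m); rewrite -/g => gt pg.
by have := leq_ltn_trans (leq_trans pg gt) tp; rewrite ltnn.
Qed.

Theorem lemma2p3 (m n k : nat) (hm : (0 < m)%N) (hn : (0 < n)%N) (hk : (0 < k)%N)
  (alpha : 'I_n -> algC) (halpha : forall i, m.-unity_root (alpha i))
  (hq : (maxn n k < pdiv m)%N) :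
  \sum_(i < n) alpha i ^+ k != 0.
Proof.
apply/negP => /eqP S0.
have np : (n < pdiv m)%N by apply: leq_ltn_trans hq; rewrite leq_maxl.
pose b i := alpha i ^+ k.
have PS : forall t, (0 < t)%N -> (t < pdiv m)%N -> \sum_(i < n) b i ^+ t = 0.
  move=> t t0 tp; have [u Hu] := Qn_aut_exists (@coprime_small m t t0 tp).
  transitivity (u (\sum_(i < n) alpha i ^+ k)); last by rewrite S0 rmorph0.
  rewrite rmorph_sum /=.
  apply: eq_bigr => i _; rewrite rmorphXn /= Hu; first by rewrite /b exprAC.
  by apply/eqP; rewrite -unity_rootE.
pose i0 := Ordinal hn.
pose b0 := b i0.
pose s := filter (fun x => x != b0) (map b (enum 'I_n)).
pose Q := \prod_(x <- s) ('X - x%:P).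
have sz : (size s < n)%N.
  rewrite size_filter.
  have H := count_predC (fun x => x != b0) (map b (enum 'I_n)).
  rewrite size_map size_enum_ord in H; rewrite -[X in (_ < X)%N]H.
  rewrite -[X in (X < _)%N]addn0 ltn_add2l -has_count.
  apply/hasP; exists b0; first by apply: map_f; rewrite mem_enum.
  by rewrite /= eqxx.
have Qroot : forall x, (Q.[x] == 0) = (x \in s).
  by move=> x; rewrite -root_prod_XsubC.
have b0nz : b0 != 0.
  rewrite expf_neq0 //; apply/negP => /eqP a0.
  by have := halpha i0; rewrite unity_rootE a0 expr0n eqn0Ngt hm /= eq_sym oner_eq0.
have Qb0 : Q.[b0] != 0 by rewrite Qroot mem_filter eqxx.
have E1 : \sum_(i < n) b i * Q.[b i] = 0.
  transitivity (\sum_(i < n) \sum_(j < size Q) Q`_j * b i ^+ j.+1).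
    by apply: eq_bigr => i _; rewrite horner_coef mulr_sumr; apply: eq_bigr => j _;
      rewrite exprS mulrCA.
  rewrite exchange_big /=; apply: big1 => j _.
  rewrite -mulr_sumr PS ?mulr0 //.
  have hj : (j < (size s).+1)%N by rewrite -(size_prod_XsubC s id). apply: leq_ltn_trans np; exact: leq_trans hj sz.
have E2 : \sum_(i < n) b i * Q.[b i] = (b0 * Q.[b0]) *+ #|[pred i | b i == b0]|.
  rewrite (bigID (fun i => b i == b0)) /= [X in _ + X]big1 ?addr0.
    rewrite -sumr_const; apply: eq_bigr => i /eqP ->; done.
  move=> i hi; apply/eqP; rewrite mulf_eq0; apply/orP; right.
  rewrite Qroot mem_filter hi /=; apply: map_f; by rewrite mem_enum.
have H : (b0 * Q.[b0]) *+ #|[pred i | b i == b0]| == 0 by rewrite -E2 E1.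
rewrite mulrn_eq0 (negbTE (mulf_neq0 b0nz Qb0)) orbF in H.
have : (0 < #|[pred i | b i == b0]|)%N.
  by apply/card_gt0P; exists i0; rewrite inE /= eqxx.
by rewrite lt0n H.
Qed.
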